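(* Let $G$ be a finite simple graph on $n\ge3$ vertices and let $A\ne0$ be a real symmetric weighted adjacency matrix of $G$. Then $$\sup_{\boldsymbol v\in\mathcal S_n}\{|\boldsymbol v|^2:\langle\boldsymbol v,A\boldsymbol v\rangle=0\}=\min\{W_A(x):\lambda_{\min}(A)^{-1}\le x\le\lambda_{\max}(A)^{-1}\}.$$
   Context: A weighted adjacency matrix is a real symmetric $A$ with $A_{ii}=0$ and $A_{ij}=0$ for non-adjacent $i\ne j$; for $A\neq 0$, $\lambda_{\min}(A)<0<\lambda_{\max}(A)$. $\mathcal S_n=\{\boldsymbol v\in\mathbb R^n:\langle\boldsymbol 1,\boldsymbol v\rangle=|\boldsymbol v|^2\}$ with $\boldsymbol 1$ the all-ones vector. $W_A(x)=\sum_{\lambda\in\sigma(A)}\frac{\langle\boldsymbol 1,P_\lambda\boldsymbol 1\rangle}{1-\lambda x}$ with $P_\lambda$ the orthogonal eigenprojections of $A$, terms with $\langle\boldsymbol 1,P_\lambda\boldsymbol 1\rangle=0$ omitted, and value $+\infty$ at a pole. *)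

(* Defs.v *)
From HB Require Import structures.
From mathcomp Require Import all_boot all_order all_algebra.
From mathcomp Require Import all_classical all_reals ereal.
Set Implicit Arguments. Unset Strict Implicit. Unset Printing Implicit Defensive.
Import Order.TTheory GRing.Theory Num.Theory.
Local Open Scope ring_scope.
Local Open Scope classical_set_scope.

Section Defs.
Variables (R : realType) (n : nat).

Definition simple_graph (e : rel 'I_n) : Prop :=
  symmetric e /\ irreflexive e.

Definition weighted_adjacency (e : rel 'I_n) (A : 'M[R]_n) : Prop :=
  A^T = A /\ (forall i, A i i = 0) /\
  (forall i j, i != j -> ~~ e i j -> A i j = 0).

Definition dotv (u v : 'cV[R]_n) : R := (u^T *m v) 0 0.
Definition ones : 'cV[R]_n := const_mx 1.

Definition Sn : set 'cV[R]_n := [set v | dotv ones v = dotv v v].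

Definition spectrum (A : 'M[R]_n) : set R := [set l | eigenvalue A l].

Definition orth_proj m (M : 'M[R]_(m, n)) : 'M[R]_n :=
  let B := row_base M in (B^T *m invmx (B *m B^T) *m B).

Definition eigenproj (A : 'M[R]_n) (l : R) : 'M[R]_n :=
  orth_proj (eigenspace A l).

Definition wcoef (A : 'M[R]_n) (l : R) : R := dotv ones (eigenproj A l *m ones).

Definition kept (A : 'M[R]_n) : set R :=
  [set l | eigenvalue A l /\ wcoef A l != 0].

Definition W (A : 'M[R]_n) (x : R) : \bar R :=
  if `[< exists l, kept A l /\ 1 - l * x = 0 >] then +oo%E
  else ((\sum_(l \in kept A) wcoef A l / (1 - l * x))%R)%:E.

End Defs.

(* Main.v *)
Set Warnings "-notation-overridden,-ambiguous-paths,-notation-incompatible-prefix,-deprecated".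
Require Import Defs.
From HB Require Import structures.
From mathcomp Require Import all_boot all_order all_algebra.
From mathcomp Require Import all_classical all_reals ereal.
From mathcomp Require Import topology normedtype derive.
From mathcomp Require polyrcf.
From mathcomp Require Import ring lra.
Import Order.TTheory GRing.Theory Num.Theory.
Local Open Scope ring_scope.
Local Open Scope classical_set_scope.
Set Implicit Arguments. Unset Strict Implicit. Unset Printing Implicit Defensive.

Section Dot.
Variables (R : realType) (n : nat).
Implicit Types (u v w : 'cV[R]_n).

Lemma dotvE u v : dotv u v = \sum_i u i 0 * v i 0.
Proof. by rewrite /dotv mxE; apply: eq_bigr => i _; rewrite mxE. Qed.

Lemma dotvC u v : dotv u v = dotv v u.
Proof. by rewrite !dotvE; apply: eq_bigr => i _; rewrite mulrC. Qed.

Lemma dotvDr u v w : dotv u (v + w) = dotv u v + dotv u w.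
Proof. by rewrite !dotvE -big_split; apply: eq_bigr => i _; rewrite mxE mulrDr. Qed.

Lemma dotvDl u v w : dotv (v + w) u = dotv v u + dotv w u.
Proof. by rewrite dotvC dotvDr !(dotvC u). Qed.

Lemma dotvZr a u v : dotv u (a *: v) = a * dotv u v.
Proof. by rewrite !dotvE mulr_sumr; apply: eq_bigr => i _; rewrite mxE mulrCA. Qed.

Lemma dotvZl a u v : dotv (a *: u) v = a * dotv u v.
Proof. by rewrite dotvC dotvZr dotvC. Qed.

Lemma dotvNr u v : dotv u (- v) = - dotv u v.
Proof. by rewrite -scaleN1r dotvZr mulN1r. Qed.

Lemma dotvNl u v : dotv (- u) v = - dotv u v.
Proof. by rewrite dotvC dotvNr dotvC. Qed.

Lemma dotvBr u v w : dotv u (v - w) = dotv u v - dotv u w.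
Proof. by rewrite dotvDr dotvNr. Qed.

Lemma dotvBl u v w : dotv (v - w) u = dotv v u - dotv w u.
Proof. by rewrite dotvDl dotvNl. Qed.

Lemma dotv0r u : dotv u 0 = 0.
Proof. by rewrite dotvE big1 // => i _; rewrite mxE mulr0. Qed.

Lemma dotv0l u : dotv 0 u = 0.
Proof. by rewrite dotvC dotv0r. Qed.

Lemma dotv_sumr (I : Type) (s : seq I) (F : I -> 'cV[R]_n) u :
  dotv u (\sum_(i <- s) F i) = \sum_(i <- s) dotv u (F i).
Proof.
elim: s => [|a s IH]; first by rewrite !big_nil dotv0r.
by rewrite !big_cons dotvDr IH.
Qed.

Lemma dotv_suml (I : Type) (s : seq I) (F : I -> 'cV[R]_n) u :
  dotv (\sum_(i <- s) F i) u = \sum_(i <- s) dotv (F i) u.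
Proof. by rewrite dotvC dotv_sumr; apply: eq_bigr => i _; rewrite dotvC. Qed.

Lemma dotv_ge0 u : 0 <= dotv u u.
Proof. by rewrite dotvE sumr_ge0 // => i _; rewrite -expr2 sqr_ge0. Qed.

Lemma dotv_eq0 u : dotv u u = 0 -> u = 0.
Proof.
rewrite dotvE => /eqP; rewrite psumr_eq0 => [/allP H|i _]; last by rewrite -expr2 sqr_ge0.
apply/matrixP => i j; rewrite (ord1 j) mxE.
by have /(_ (mem_index_enum i))/implyP/(_ isT) := H i; rewrite -expr2 sqrf_eq0 => /eqP.
Qed.

Lemma dotv_sym (M : 'M[R]_n) u v : M^T = M -> dotv u (M *m v) = dotv (M *m u) v.
Proof. by move=> MT; rewrite /dotv trmx_mul MT mulmxA. Qed.

Lemma dotv_trmx (M : 'M[R]_n) u v : dotv u (M *m v) = dotv (M^T *m u) v.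
Proof. by rewrite /dotv trmx_mul trmxK mulmxA. Qed.

End Dot.

Section Proj.
Variables (R : realType) (n : nat).
Implicit Types (u v w : 'cV[R]_n).

Lemma Gram_unit m (B : 'M[R]_(m, n)) : row_free B -> B *m B^T \in unitmx.
Proof.
move=> fB; rewrite -row_free_unit -kermx_eq0; apply/rowV0P => y /sub_kermxP yG.
have : dotv (y *m B)^T (y *m B)^T = 0.
  by rewrite /dotv trmxK trmx_mul mulmxA -(mulmxA y) yG mul0mx mxE.
move/dotv_eq0 => H0.
have /eqP : y *m B = 0 by rewrite -[y *m B]trmxK H0 trmx0.
by rewrite mulmx_free_eq0 // => /eqP.
Qed.

Lemma orth_proj_sym m (M : 'M[R]_(m, n)) : (orth_proj M)^T = orth_proj M.
Proof.
rewrite /orth_proj; move: (row_base M) => B.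
by rewrite !trmx_mul trmxK trmx_inv trmx_mul trmxK mulmxA.
Qed.

Lemma orth_proj_id m (M : 'M[R]_(m, n)) v : (v^T <= M)%MS -> orth_proj M *m v = v.
Proof.
move=> vM; have /submxP [y vy] : (v^T <= row_base M)%MS by rewrite eq_row_base.
have GU := Gram_unit (row_base_free M).
rewrite /orth_proj; move: (row_base M) GU vy => B GU vy.
rewrite -(trmxK v) vy trmx_mul -!mulmxA (mulmxA B) mulKmx //.
Qed.

Lemma orth_proj_0 m (M : 'M[R]_(m, n)) v :
  (forall x : 'rV_n, (x <= M)%MS -> x *m v = 0) -> orth_proj M *m v = 0.
Proof.
move=> H.
have HB : row_base M *m v = 0.
  apply/row_matrixP => i; rewrite row_mul row0; apply: H.
  by rewrite (submx_trans (row_sub i _)) // eq_row_base.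
rewrite /orth_proj; move: (row_base M) HB => B HB.
by rewrite -!mulmxA HB !mulmx0.
Qed.

Lemma orth_proj_range m (M : 'M[R]_(m, n)) v : ((orth_proj M *m v)^T <= M)%MS.
Proof.
have sB : (row_base M <= M)%MS by rewrite eq_row_base.
rewrite /orth_proj; move: (row_base M) sB => B sB.
rewrite !trmx_mul trmxK !mulmxA; exact: submx_trans (submxMl _ _) sB.
Qed.

Variable A : 'M[R]_n.
Hypothesis symA : A^T = A.

Lemma eigcolP l v : reflect (A *m v = l *: v) (v^T <= eigenspace A l)%MS.
Proof.
apply: (iffP eigenspaceP) => H.
  by have := congr1 trmx H; rewrite trmx_mul symA trmxK linearZ /= trmxK.
by rewrite -{1}symA -trmx_mul H linearZ.
Qed.

Lemma eigenproj_sym l : (eigenproj A l)^T = eigenproj A l.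
Proof. exact: orth_proj_sym. Qed.

Lemma eigenproj_A l v : A *m (eigenproj A l *m v) = l *: (eigenproj A l *m v).
Proof. by apply/eigcolP; apply: orth_proj_range. Qed.

Lemma eigenproj_id l v : A *m v = l *: v -> eigenproj A l *m v = v.
Proof. by move/eigcolP; apply: orth_proj_id. Qed.

Lemma eigenproj_idem l v : eigenproj A l *m (eigenproj A l *m v) = eigenproj A l *m v.
Proof. by apply: eigenproj_id; apply: eigenproj_A. Qed.

Lemma dotv_proj l u v : dotv u (eigenproj A l *m v) = dotv (eigenproj A l *m u) v.
Proof. by rewrite dotv_sym // eigenproj_sym. Qed.

Lemma dotv_proj_sq l v :
  dotv v (eigenproj A l *m v) = dotv (eigenproj A l *m v) (eigenproj A l *m v).
Proof. by rewrite -{1}eigenproj_idem dotv_proj. Qed.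

Lemma eig_orth l m u v : A *m u = l *: u -> A *m v = m *: v -> l != m ->
  dotv u v = 0.
Proof.
move=> Hu Hv lm.
have : dotv u (A *m v) = dotv (A *m u) v by rewrite dotv_sym.
rewrite Hu Hv dotvZl dotvZr => /eqP; rewrite -subr_eq0 -mulrBl mulf_eq0.
by rewrite subr_eq0 eq_sym (negbTE lm) => /eqP.
Qed.

Lemma eigenproj_other l m v : A *m v = l *: v -> l != m -> eigenproj A m *m v = 0.
Proof.
move=> Hv lm; apply: orth_proj_0 => x /eigenspaceP Hx.
have Hx' : A *m x^T = m *: x^T.
  by have := congr1 trmx Hx; rewrite trmx_mul symA linearZ.
apply/matrixP => i j; rewrite (ord1 i) (ord1 j) [in RHS]mxE.
have := eig_orth Hx' Hv; rewrite eq_sym lm => /(_ isT).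
by rewrite /dotv trmxK => ->.
Qed.

End Proj.

Import numFieldNormedType.Exports.

Section Topo.
Variables (R : realType) (n : nat).

Lemma sum_cont (T : topologicalType) (I : Type) (s : seq I) (F : I -> T -> R) x :
  (forall i, {for x, continuous (F i)}) ->
  {for x, continuous (fun y => \sum_(i <- s) F i y)}.
Proof.
move=> H; elim: s => [|a s IH].
  have -> : (fun y => \sum_(i <- [::]) F i y) = (fun=> 0) by apply/funext => y; rewrite big_nil.
  exact: cst_continuous.
have -> : (fun y => \sum_(i <- a :: s) F i y) = (F a + (fun y => \sum_(i <- s) F i y))%R.
  by apply/funext => y; rewrite big_cons.
exact: continuousD.
Qed.

Definition qf (Q : 'M[R]_n) (w : 'rV[R]_n) := dotv w^T (Q *m w^T).

Lemma qf_cont (Q : 'M[R]_n) : continuous (qf Q).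
Proof.
move=> w.
have -> : qf Q = (fun w => \sum_(i <- index_enum 'I_n) \sum_(j <- index_enum 'I_n) w ord0 i * Q i j * w ord0 j).
  apply/funext => y; rewrite /qf dotvE; apply: eq_bigr => i _.
  rewrite !mxE mulr_sumr; apply: eq_bigr => j _; rewrite !mxE mulrA.
  by rewrite (ord1 ord0).
apply: sum_cont => i; apply: sum_cont => j.
apply: continuousM; last exact: coord_continuous.
apply: continuousM; first exact: coord_continuous.
exact: cst_continuous.
Qed.

End Topo.

Import numFieldNormedType.Exports.

Section Eig.
Variables (R : realType) (n : nat).

Lemma qfE (Q : 'M[R]_n) (v : 'cV_n) : qf Q v^T = dotv v (Q *m v).
Proof. by rewrite /qf trmxK. Qed.

Lemma dotv_gt0 (v : 'cV[R]_n) : v != 0 -> 0 < dotv v v.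
Proof.
move=> v0; rewrite lt_def dotv_ge0 andbT; apply/eqP => /dotv_eq0 H.
by rewrite H eqxx in v0.
Qed.

Lemma normalize (v : 'cV[R]_n) : v != 0 ->
  let s := Num.sqrt (dotv v v) in 0 < s /\ s * s = dotv v v.
Proof.
move=> v0 /=; have d0 := dotv_gt0 v0; split; first by rewrite sqrtr_gt0.
by rewrite -expr2 sqr_sqrtr // ltW.
Qed.

Lemma arith_aux (q p b t : R) : 0 < q -> 0 < b -> - (b - 1) <= p -> t * b = q -> 0 < t ->
  2 * t * q + t ^+ 2 * p <= 0 -> False.
Proof. move=> *; nra. Qed.

Lemma sym_eigvec (A N : 'M[R]_n) : A^T = A ->
  (forall v : 'cV_n, N *m v = 0 -> N *m (A *m v) = 0) ->
  forall v0 : 'cV_n, N *m v0 = 0 -> v0 != 0 ->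
  exists mu, exists2 v : 'cV_n, (N *m v = 0 /\ v != 0) & A *m v = mu *: v.
Proof.
move=> symA stabN v0 Nv0 v00.
have kerE : forall v : 'cV_n, qf (N^T *m N) v^T = 0 <-> N *m v = 0.
  move=> v; rewrite qfE -mulmxA dotv_trmx trmxK; split; last by move=> ->; rewrite dotv0l.
  exact: dotv_eq0.
pose K := qf (N^T *m N) @^-1` [set 0] `&` qf 1%:M @^-1` [set 1].
have KE : forall v : 'cV_n, K v^T <-> N *m v = 0 /\ dotv v v = 1.
  move=> v; rewrite /K /= (qfE 1%:M) mul1mx; split => -[H1 H2]; split => //; exact/kerE.
have Kne : K !=set0.
  have [s0 ss] := normalize v00.
  set s := Num.sqrt _ in s0 ss.
  exists (s^-1 *: v0)^T; apply/KE; split.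
    by rewrite -scalemxAr Nv0 scaler0.
  rewrite dotvZl dotvZr -ss; field; exact: lt0r_neq0.
have Kcomp : compact K.
  apply: bounded_closed_compact.
    exists 1; split => // M M1 w Kw /=.
    have [_ w1] : N *m w^T = 0 /\ dotv w^T w^T = 1 by apply/KE; rewrite trmxK.
    apply: (@le_trans _ _ 1); last exact: ltW.
    rewrite [X in X <= _]/Num.norm /= mx_normrE.
    apply: Order.POrderTheory.bigmax_le => // -[i j] _ /=.
    have : (w i j)^+2 <= 1.
      rewrite -w1 dotvE (bigD1 j) //= !mxE (ord1 i) -expr2 lerDl.
      by apply: sumr_ge0 => k _; rewrite -expr2 sqr_ge0.
    move=> H; rewrite -(ler_pXn2r (n:=2)) //= ?nnegrE ?normr_ge0 //.
    by rewrite expr1n real_normK // num_real.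
  apply: closedI; apply: preimage_closed; try exact: closed_eq.
    by move=> x _; apply: qf_cont.
  by move=> x _; apply: qf_cont.
have [c cK cmax] := compact_EVT_max Kne Kcomp (continuous_subspaceT (qf_cont (Q:=A))).
rewrite inE in cK.
set vs := c^T.
have [Nvs vs1] : N *m vs = 0 /\ dotv vs vs = 1 by apply/KE; rewrite trmxK.
set mu := qf A c.
have muE : mu = dotv vs (A *m vs) by rewrite /mu /vs -qfE trmxK.
have claim1 : forall v : 'cV_n, N *m v = 0 -> dotv v (A *m v) <= mu * dotv v v.
  move=> v Nv; have [->|v0'] := eqVneq v 0.
    by rewrite !dotv0l mulr0.
  have [s0 ss] := normalize v0'; set s := Num.sqrt _ in s0 ss.
  have : qf A (s^-1 *: v)^T <= mu.
    apply: cmax; rewrite inE; apply/KE; split.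
      by rewrite -scalemxAr Nv scaler0.
    rewrite dotvZl dotvZr -ss; field; exact: lt0r_neq0.
  rewrite qfE -scalemxAr dotvZl dotvZr -ss => H.
  have sne : s != 0 := lt0r_neq0 s0.
  have : dotv v (A *m v) = (s^-1 * (s^-1 * dotv v (A *m v))) * (s * s) by field.
  move=> ->; apply: ler_wpM2r; first by rewrite mulr_ge0 // ltW.
  exact: H.
pose C := A - mu%:M.
have CE : forall v : 'cV_n, C *m v = A *m v - mu *: v.
  by move=> v; rewrite mulmxBl mul_scalar_mx.
have symC : C^T = C by rewrite /C linearB /= tr_scalar_mx symA.
set u := C *m vs.
have Nu : N *m u = 0 by rewrite /u CE mulmxBr stabN // -scalemxAr Nvs scaler0 subr0.
have quad : forall t, 2 * t * dotv u u + t ^+ 2 * dotv u (C *m u) <= 0.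
  move=> t.
  have Nv' : N *m (vs + t *: u) = 0 by rewrite mulmxDr -scalemxAr Nu scaler0 addr0.
  have := claim1 _ Nv'.
  have e1 : dotv (vs + t *: u) (A *m (vs + t *: u)) - mu * dotv (vs + t *: u) (vs + t *: u)
     = dotv (vs + t *: u) (C *m (vs + t *: u)).
    by rewrite CE dotvBr dotvZr.
  rewrite -subr_le0 e1.
  rewrite mulmxDr -scalemxAr !dotvDl !dotvDr !dotvZl !dotvZr.
  have e2 : dotv vs (C *m vs) = 0 by rewrite CE dotvBr dotvZr vs1 -muE mulr1 subrr.
  have e3 : dotv vs (C *m u) = dotv u u by rewrite dotv_sym // dotvC.
  have e4 : dotv u (C *m vs) = dotv u u by [].
  rewrite e2 e3 e4 => H; apply: le_trans H; rewrite le_eqVlt; apply/orP; left; apply/eqP; ring.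
have u0 : u = 0.
  apply: dotv_eq0; apply/eqP; rewrite eq_le dotv_ge0 andbT.
  rewrite leNgt; apply/negP => q0.
  set q := dotv u u in q0 quad; set p := dotv u (C *m u) in quad.
  set b := `|p| + 1.
  have b0 : 0 < b by rewrite /b ltr_wpDl.
  have := quad (q / b).
  have pb : - (b - 1) <= p by rewrite /b addrK; have := ler_norm (- p); rewrite normrN; lra.
  have tb : q / b * b = q by rewrite mulfVK // lt0r_neq0.
  have t0 : 0 < q / b by rewrite divr_gt0.
  move: (q / b) tb t0 => t tb t0 H.
  exact: (arith_aux q0 b0 pb tb t0 H).
exists mu; exists vs.
  split => //.
  by apply/eqP => vs0; rewrite vs0 dotv0l in vs1; move/eqP: vs1; rewrite eq_sym oner_eq0.
by apply/eqP; rewrite -subr_eq0 -CE -/u u0.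
Qed.

End Eig.


Section Spec.
Variables (R : realType) (n : nat) (A : 'M[R]_n).
Hypothesis symA : A^T = A.

Definition rs := polyrcf.rootsR (char_poly A).

Lemma mem_rs x : (x \in rs) = eigenvalue A x.
Proof.
have nz : char_poly A != 0 by apply: monic_neq0; apply: char_poly_monic.
have := polyrcf.roots_on_rootsR nz x.
by rewrite in_itv /= eigenvalue_root_char => <-.
Qed.

Lemma rs_uniq : uniq rs.
Proof. exact: polyrcf.uniq_roots. Qed.

Definition Vsum := (\sum_(i < size rs) eigenspace A rs`_i)%MS.

Lemma Vsum_stable (v : 'cV_n) : Vsum *m v = 0 -> Vsum *m (A *m v) = 0.
Proof.
move=> Vv.
have : (Vsum *m A <= Vsum)%MS.
  rewrite /Vsum sumsmxMr; apply: sumsmxS => i _.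
  by have /eigenspaceP -> := submx_refl (eigenspace A rs`_i); apply: scalemx_sub.
by case/submxP => X HX; rewrite mulmxA HX -mulmxA Vv mulmx0.
Qed.

Lemma Vsum_ker (v : 'cV_n) : Vsum *m v = 0 -> v = 0.
Proof.
move=> Vv; apply/eqP; apply/negP => /negP v0.
have [mu [w [Vw w0] Aw]] := sym_eigvec symA Vsum_stable Vv v0.
have wE : (w^T *m A = mu *: w^T).
  by rewrite -symA -trmx_mul Aw linearZ.
have : eigenvalue A mu by apply/eigenvalueP; exists w^T => //; rewrite trmx_eq0.
rewrite -mem_rs => /(nthP 0) [i ilt rsi].
have : (w^T <= Vsum)%MS.
  apply: (sumsmx_sup (Ordinal ilt)) => //=; rewrite rsi; exact/eigenspaceP.
case/submxP => y wy.
have : dotv w w = 0 by rewrite /dotv wy -mulmxA Vw mulmx0 mxE.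
by move/dotv_eq0 => w00; rewrite w00 eqxx in w0.
Qed.

Lemma Vsum_full : row_full Vsum.
Proof.
rewrite /row_full -mxrank_tr.
have : row_free Vsum^T.
  rewrite -kermx_eq0; apply/rowV0P => x /sub_kermxP xV.
  have : Vsum *m x^T = 0 by rewrite -(trmxK Vsum) -trmx_mul xV trmx0.
  by move/Vsum_ker => /(congr1 trmx); rewrite trmxK trmx0.
by [].
Qed.

Lemma sum_proj (v : 'cV_n) : \sum_(r <- rs) eigenproj A r *m v = v.
Proof.
have : (v^T <= Vsum)%MS by apply: submx_full; apply: Vsum_full.
case/sub_sumsmxP => u_ Hv.
pose x i := (u_ i *m eigenspace A rs`_i)^T.
have Ax i : A *m x i = rs`_i *: x i.
  by apply/(eigcolP symA); rewrite /x trmxK submxMl.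
have vE : v = \sum_i x i by rewrite -[v]trmxK Hv linear_sum.
rewrite (big_nth 0) big_mkord.
transitivity (\sum_(j < size rs) \sum_(i < size rs) eigenproj A rs`_j *m x i).
  by apply: eq_bigr => j _; rewrite {1}vE mulmx_sumr.
rewrite exchange_big /= vE; apply: eq_bigr => i _.
rewrite (bigD1 i) //= (eigenproj_id symA (Ax i)) big1 ?addr0 // => j ji.
apply: (eigenproj_other symA (Ax i)).
by rewrite nth_uniq // ?rs_uniq // eq_sym.
Qed.

End Spec.


Section Main.
Variables (R : realType) (n : nat) (A : 'M[R]_n).
Hypothesis symA : A^T = A.

Local Notation P r := (eigenproj A r).
Local Notation p r := (eigenproj A r *m ones R n).
Local Notation c r := (wcoef A r).
Local Notation rs := (rs A).

Lemma dotv_delta (i : 'I_n) (v : 'cV[R]_n) : dotv (delta_mx i 0) v = v i 0.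
Proof. by rewrite /dotv trmx_delta -rowE mxE. Qed.

Lemma psd_zero (M : 'M[R]_n) : M^T = M -> (forall i, M i i = 0) ->
  (forall w, 0 <= dotv w (M *m w)) -> M = 0.
Proof.
move=> symM d0 H; apply/matrixP => i j; rewrite mxE.
pose e k : 'cV[R]_n := delta_mx k 0.
have eM k l : dotv (e k) (M *m e l) = M k l by rewrite dotv_delta -colE mxE.
have := H (e i - M i j *: e j).
rewrite mulmxBr -scalemxAr !dotvBl !dotvBr !dotvZl !dotvZr !eM !d0.
have -> : M j i = M i j by rewrite -{1}symM mxE.
move=> h; have : M i j ^+ 2 <= 0 by nra.
by move=> h2; apply/eqP; rewrite -sqrf_eq0 eq_le h2 sqr_ge0.
Qed.

Lemma rayleigh w : dotv w (A *m w) = \sum_(r <- rs) r * dotv w (P r *m w).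
Proof.
rewrite -{2}(sum_proj symA w) mulmx_sumr dotv_sumr; apply: eq_bigr => r _.
by rewrite eigenproj_A // dotvZr.
Qed.

Lemma norm_decomp w : dotv w w = \sum_(r <- rs) dotv w (P r *m w).
Proof. by rewrite -{2}(sum_proj symA w) dotv_sumr. Qed.

Lemma dotvP_ge0 r w : 0 <= dotv w (P r *m w).
Proof. by rewrite dotv_proj_sq // dotv_ge0. Qed.

Lemma c_sq r : c r = dotv (p r) (p r).
Proof. by rewrite /wcoef dotv_proj_sq. Qed.

Lemma c_ge0 r : 0 <= c r.
Proof. by rewrite c_sq dotv_ge0. Qed.

Lemma c0_p r : c r = 0 -> p r = 0.
Proof. by rewrite c_sq; apply: dotv_eq0. Qed.

Lemma Ap r : A *m p r = r *: p r.
Proof. exact: eigenproj_A. Qed.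

Lemma p1 r : dotv (p r) (ones R n) = c r.
Proof. by rewrite dotvC. Qed.

Lemma p_orth r s : r != s -> dotv (p r) (p s) = 0.
Proof. by move=> rs'; apply: (eig_orth symA (Ap r) (Ap s)). Qed.

Definition ks := [seq r <- rs | c r != 0].

Lemma ks_uniq : uniq ks.
Proof. by rewrite filter_uniq // rs_uniq. Qed.

Lemma mem_ks r : (r \in ks) = eigenvalue A r && (c r != 0).
Proof. by rewrite mem_filter mem_rs andbC. Qed.

Lemma kept_ks : kept A = [set` ks].
Proof.
apply/seteqP; split => r; rewrite /kept /= mem_ks.
  by move=> [-> ->].
by case/andP.
Qed.

Lemma sum_ks (F : R -> 'cV[R]_n) : (forall r, c r = 0 -> F r = 0) ->
  \sum_(r <- ks) F r = \sum_(r <- rs) F r.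
Proof.
move=> H; rewrite big_filter [in RHS](bigID (fun r => c r != 0)) /=.
by rewrite [X in _ + X]big1 ?addr0 // => r /negPn/eqP /H.
Qed.

Lemma sum_p : \sum_(r <- ks) p r = ones R n.
Proof. by rewrite sum_ks ?sum_proj // => r /c0_p. Qed.

Lemma parseval (a b : R -> R) :
  dotv (\sum_(r <- ks) a r *: p r) (\sum_(s <- ks) b s *: p s)
  = \sum_(r <- ks) a r * b r * c r.
Proof.
rewrite dotv_suml; apply: eq_big_seq => r rk.
rewrite dotv_sumr (bigD1_seq r) //= ?ks_uniq // big1_seq ?addr0.
  by rewrite dotvZl dotvZr -c_sq mulrA.
move=> s /andP [sr _]; rewrite dotvZl dotvZr p_orth ?mulr0 //.
by rewrite eq_sym.
Qed.

End Main.


Section Main2.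
Variables (R : realType) (n : nat) (A : 'M[R]_n) (lmin lmax : R).
Hypothesis symA : A^T = A.
Hypothesis diag0 : forall i, A i i = 0.
Hypothesis A0 : A != 0.
Hypothesis Hmin : eigenvalue A lmin.
Hypothesis Hminle : forall l, eigenvalue A l -> lmin <= l.
Hypothesis Hmax : eigenvalue A lmax.
Hypothesis Hmaxle : forall l, eigenvalue A l -> l <= lmax.

Local Notation P r := (eigenproj A r).
Local Notation p r := (eigenproj A r *m ones R n).
Local Notation c r := (wcoef A r).
Local Notation rs := (rs A).
Local Notation ks := (ks A).

Lemma negA_zero : (forall w, 0 <= dotv w ((- A) *m w)) -> A = 0.
Proof.
move=> H; apply/eqP; rewrite -oppr_eq0; apply/eqP; apply: psd_zero => //.
- by rewrite linearN /= symA.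
- by move=> i; rewrite mxE diag0 oppr0.
Qed.

Lemma lmax_gt0 : 0 < lmax.
Proof.
rewrite ltNge; apply/negP => H; move/eqP: A0; apply.
apply: (negA_zero) => w; rewrite mulNmx dotvNr rayleigh // -sumrN big_seq.
apply: sumr_ge0 => r; rewrite mem_rs => /Hmaxle rl.
rewrite -mulNr mulr_ge0 ?dotvP_ge0 // oppr_ge0; exact: le_trans rl H.
Qed.

Lemma lmin_lt0 : lmin < 0.
Proof.
rewrite ltNge; apply/negP => H; move/eqP: A0; apply.
apply: psd_zero => // w.
rewrite rayleigh // big_seq.
apply: sumr_ge0 => r; rewrite mem_rs => /Hminle rl.
rewrite mulr_ge0 ?dotvP_ge0 //; exact: le_trans H rl.
Qed.

Definition inJ x := lmin^-1 <= x <= lmax^-1.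

Lemma J_facts x : inJ x -> lmax * x <= 1 /\ lmin * x <= 1.
Proof.
case/andP => h1 h2; have l0 := lmax_gt0; have m0 := lmin_lt0.
split.
  by rewrite -(mulfV (lt0r_neq0 l0)) ler_pM2l.
by rewrite -(mulfV (ltr0_neq0 m0)) ler_nM2l.
Qed.

Lemma one_sub_ge0 x r : inJ x -> eigenvalue A r -> 0 <= 1 - r * x.
Proof.
move=> /J_facts [h1 h2] er; have := Hmaxle er; have := Hminle er => e1 e2.
have [x0|x0] := lerP 0 x; nra.
Qed.

Lemma pole_end x r : inJ x -> eigenvalue A r -> 1 - r * x = 0 ->
  (r = lmax /\ x = lmax^-1) \/ (r = lmin /\ x = lmin^-1).
Proof.
move=> Jx er e0; have [h1 h2] := J_facts Jx.
have := Hmaxle er; have := Hminle er => e1 e2.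
have l0 := lmax_gt0; have m0 := lmin_lt0.
have [x0|x0|x0] := ltgtP 0 x.
- left.
  have ex : lmax * x = 1 by nra.
  have rl : r = lmax.
    by apply/eqP; rewrite -subr_eq0; apply/eqP; apply: (@mulIf _ x); [rewrite gt_eqF|]; nra.
  split => //; apply: (@mulfI _ lmax); first by rewrite gt_eqF.
  by rewrite ex mulfV // gt_eqF.
- right.
  have ex : lmin * x = 1 by nra.
  have rl : r = lmin.
    by apply/eqP; rewrite -subr_eq0; apply/eqP; apply: (@mulIf _ x); [rewrite lt_eqF|]; nra.
  split => //; apply: (@mulfI _ lmin); first by rewrite lt_eqF.
  by rewrite ex mulfV // lt_eqF.
- by move: e0; rewrite -x0 mulr0 subr0 => /eqP; rewrite oner_eq0.
Qed.

Definition Mx x : 'M[R]_n := 1%:M - x *: A.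

Lemma Mx_v x (v : 'cV[R]_n) : Mx x *m v = v - x *: (A *m v).
Proof. by rewrite mulmxBl mul1mx -scalemxAl. Qed.

Lemma Mx_sym x : (Mx x)^T = Mx x.
Proof. by rewrite /Mx linearB /= linearZ /= tr_scalar_mx symA. Qed.

Lemma Mx_p x r : Mx x *m p r = (1 - r * x) *: p r.
Proof. by rewrite Mx_v Ap // scalerA scalerBl scale1r mulrC. Qed.

Lemma dotv_Mx x (v : 'cV[R]_n) : dotv v (Mx x *m v) = dotv v v - x * dotv v (A *m v).
Proof. by rewrite Mx_v dotvBr dotvZr. Qed.

Lemma psd x (w : 'cV[R]_n) : inJ x -> 0 <= dotv w (Mx x *m w).
Proof.
move=> Jx; rewrite dotv_Mx rayleigh // (norm_decomp symA) mulr_sumr -sumrB big_seq.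
apply: sumr_ge0 => r; rewrite mem_rs => er.
rewrite mulrA -{1}(mul1r (dotv w _)) -mulrBl mulr_ge0 ?dotvP_ge0 //.
by rewrite (mulrC x); apply: one_sub_ge0.
Qed.

Definition uvec x := \sum_(r <- ks) (1 - r * x)^-1 *: p r.
Definition nopole x := forall r, r \in ks -> 1 - r * x != 0.

Lemma Mu x : nopole x -> Mx x *m uvec x = ones R n.
Proof.
move=> np; rewrite /uvec mulmx_sumr; transitivity (\sum_(r <- ks) p r); last exact: sum_p.
apply: eq_big_seq => r rk.
by rewrite -scalemxAr Mx_p scalerA mulVf ?scale1r // np.
Qed.

Lemma dot_u1 x : dotv (uvec x) (ones R n) = \sum_(r <- ks) c r / (1 - r * x).
Proof.
rewrite /uvec dotv_suml; apply: eq_bigr => r _.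
by rewrite dotvZl p1 mulrC.
Qed.

Lemma W_fin x : nopole x -> W A x = (\sum_(r <- ks) c r / (1 - r * x))%:E.
Proof.
move=> np; rewrite /W asboolF; last first.
  move=> [l []]; rewrite (@kept_ks _ _ A) /= => lk; apply/eqP; exact: np.
by rewrite (@kept_ks _ _ A) -fsbig_seq // ks_uniq.
Qed.

Lemma W_pole x r : r \in ks -> 1 - r * x = 0 -> W A x = +oo%E.
Proof.
move=> rk r0; rewrite /W asboolT //; exists r; split => //.
by rewrite (@kept_ks _ _ A).
Qed.

Lemma weak x (v : 'cV[R]_n) : inJ x -> Sn v -> dotv v (A *m v) = 0 ->
  ((dotv v v)%:E <= W A x)%E.
Proof.
move=> Jx Sv Av0.
case: (pselect (exists2 r, r \in ks & 1 - r * x = 0)) => [[r rk r0]|np].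
  by rewrite (W_pole rk r0) leey.
have np2 : nopole x.
  by move=> r rk; apply/eqP => r0; apply: np; exists r.
clear np; rename np2 into np.
rewrite W_fin // lee_fin -dot_u1.
have := psd (uvec x - v) Jx.
rewrite mulmxBr Mu // dotvBl !dotvBr dotv_Mx Av0 mulr0 subr0.
rewrite dotv_sym ?Mx_sym // Mu //.
move: Sv; rewrite /Sn /= => Sv.
rewrite (dotvC v (ones R n)) Sv.
lra.
Qed.

Lemma feasible x (v : 'cV[R]_n) : Mx x *m v = ones R n -> dotv v (A *m v) = 0 ->
  Sn v /\ dotv v v = dotv v (ones R n).
Proof.
move=> Mv Av0.
have e : dotv v v = dotv v (ones R n).
  by rewrite -Mv dotv_Mx Av0 mulr0 subr0.
by split => //; rewrite /Sn /= dotvC e.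
Qed.

Definition hsum x := \sum_(r <- ks) (1 - r * x)^-1 * ((1 - r * x)^-1 * r) * c r.

Lemma h_hs x : dotv (uvec x) (A *m uvec x) = hsum x.
Proof.
rewrite /hsum -parseval //; congr dotv.
rewrite /uvec mulmx_sumr; apply: eq_bigr => r _.
by rewrite -scalemxAr Ap // scalerA.
Qed.

End Main2.

Import numFieldNormedType.Exports.

Lemma sum_cont_seq (R : realType) (T : topologicalType) (I : eqType) (s : seq I)
  (F : I -> T -> R) x :
  (forall i, i \in s -> {for x, continuous (F i)}) ->
  {for x, continuous (fun y => \sum_(i <- s) F i y)}.
Proof.
elim: s => [|a s IH] H.
  have -> : (fun y => \sum_(i <- [::]) F i y) = (fun=> 0) by apply/funext => y; rewrite big_nil.
  exact: cst_continuous.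
have -> : (fun y => \sum_(i <- a :: s) F i y) = (F a + (fun y => \sum_(i <- s) F i y))%R.
  by apply/funext => y; rewrite big_cons.
apply: continuousD; first by apply: H; rewrite inE eqxx.
by apply: IH => i iin; apply: H; rewrite inE iin orbT.
Qed.

Lemma cont_term (R : realType) (r c0 y : R) : 1 - r * y != 0 ->
  {for y, continuous (fun z : R => (1 - r * z)^-1 * ((1 - r * z)^-1 * r) * c0)}.
Proof.
move=> ny.
have g_cont : {for y, continuous (fun z : R => 1 - r * z)}.
  have -> : (fun z : R => 1 - r * z) = ((fun=> 1) + (fun z => - (r * z)))%R.
    by apply/funext.
  apply: continuousD; first exact: cst_continuous.
  apply: continuousN.
  apply: (continuousM (s := fun=> r) (t := fun z => z)); first exact: cst_continuous.
  exact: cvg_id.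
have gi := continuousV (s := fun z : R => 1 - r * z) ny g_cont.
have -> : (fun z : R => (1 - r * z)^-1 * ((1 - r * z)^-1 * r) * c0) =
   (((fun z => (1 - r * z)^-1) \* ((fun z => (1 - r * z)^-1) \* (fun=> r))) \* (fun=> c0))%R.
  by apply/funext.
apply: continuousM; last exact: cst_continuous.
apply: continuousM => //.
apply: continuousM => //.
exact: cst_continuous.
Qed.

Section Main3.
Variables (R : realType) (n : nat) (A : 'M[R]_n) (lmin lmax : R).
Hypothesis symA : A^T = A.
Hypothesis diag0 : forall i, A i i = 0.
Hypothesis A0 : A != 0.
Hypothesis Hmin : eigenvalue A lmin.
Hypothesis Hminle : forall l, eigenvalue A l -> lmin <= l.
Hypothesis Hmax : eigenvalue A lmax.
Hypothesis Hmaxle : forall l, eigenvalue A l -> l <= lmax.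

Local Notation P r := (eigenproj A r).
Local Notation p r := (eigenproj A r *m ones R n).
Local Notation c r := (wcoef A r).
Local Notation rs := (rs A).
Local Notation ks := (ks A).
Local Notation u := (uvec A).
Local Notation hs := (hsum A).
Local Notation Mx := (Mx A).
Local Notation nopole := (nopole A).

Lemma hs_cont a b : (forall y, a <= y <= b -> nopole y) ->
  {within `[a, b], continuous hs}.
Proof.
move=> H; apply: continuous_in_subspaceT => y; rewrite inE /= in_itv /= => /H np.
rewrite /hsum; apply: sum_cont_seq => r rk.
exact: cont_term (np r rk).
Qed.



Definition feas x := exists v : 'cV[R]_n,
  [/\ Sn v, dotv v (A *m v) = 0 & dotv v v = dotv (u x) (ones R n)].

Lemma feas_int x : nopole x -> hs x = 0 -> feas x.
Proof.
move=> np h0; exists (u x).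
have [Sv e] := feasible (Mu symA np) (etrans (h_hs symA x) h0).
by split => //; rewrite (h_hs symA) h0.
Qed.

Lemma feas_end lam x : eigenvalue A lam -> c lam = 0 -> lam != 0 -> x = lam^-1 ->
  nopole x -> hs x * lam <= 0 -> feas x.
Proof.
move=> el cl l0 xl np hl.
have [w wA w0] := eigenvalueP el.
set e := w^T.
have Ae : A *m e = lam *: e by rewrite /e -{1}symA -trmx_mul wA linearZ.
have e0 : e != 0 by rewrite /e trmx_eq0.
have de0 := dotv_gt0 e0.
set de := dotv e e in de0.
have e1 : dotv (ones R n) e = 0.
  rewrite -{1}(eigenproj_id symA Ae) dotv_proj // c0_p // dotv0l //.
have ue : dotv (u x) e = 0.
  rewrite /uvec dotv_suml big1_seq // => r /andP [_ rk].
  rewrite dotvZl (eig_orth symA (Ap symA r) Ae) ?mulr0 //.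
  apply/eqP => rl; move: rk; rewrite mem_ks rl cl eqxx andbF //.
have Me : Mx x *m e = 0.
  by rewrite Mx_v Ae scalerA xl mulVf // scale1r subrr.
set q := - hs x / (lam * de).
have q0 : 0 <= q.
  have -> : q = (- (hs x * lam)) / (lam ^+ 2 * de).
    rewrite /q; field; apply/andP; split => //; exact: lt0r_neq0.
  apply: divr_ge0; first by rewrite oppr_ge0.
  by apply: mulr_ge0; [apply: sqr_ge0 | apply: ltW].
set t := Num.sqrt q.
have tt : t * t = q by rewrite -expr2 sqr_sqrtr.
exists (u x + t *: e).
have Mv : Mx x *m (u x + t *: e) = ones R n.
  by rewrite mulmxDr -scalemxAr Me scaler0 addr0 Mu.
have Av : dotv (u x + t *: e) (A *m (u x + t *: e)) = 0.
  rewrite mulmxDr -scalemxAr Ae !dotvDl !dotvDr !dotvZl !dotvZr (h_hs symA).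
  rewrite (dotv_sym _ _ symA) Ae dotvZl (dotvC e) ue -/de.
  rewrite !mulr0 addr0 add0r mulrA tt /q; field.
  apply/andP; split => //; exact: lt0r_neq0.
have [Sv ev] := feasible Mv Av.
split => //; rewrite ev dotvDl dotvZl (dotvC e) e1 mulr0 addr0 //.
Qed.


Lemma term_lb (lam d r : R) (cr : R) : lam != 0 -> 0 < d -> d <= 1 -> 0 <= cr ->
  r * lam <= lam ^+ 2 ->
  - (`|r * lam| * cr) <= lam * ((1 - r * ((1 - d) / lam))^-1 *
                      ((1 - r * ((1 - d) / lam))^-1 * r) * cr)
  /\ d <= 1 - r * ((1 - d) / lam).
Proof.
move=> l0 d0 d1 cr0 rl.
have l2 : 0 < lam ^+ 2 by rewrite lt_def sqr_ge0 andbT expf_neq0.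
set rho := r * lam / lam ^+ 2.
have rho1 : rho <= 1 by rewrite /rho ler_pdivrMr // mul1r.
have rxE : r * ((1 - d) / lam) = rho * (1 - d) by rewrite /rho; field.
rewrite rxE.
have Dd : d <= 1 - rho * (1 - d) by nra.
split => //.
set D := 1 - rho * (1 - d).
have D0 : 0 < D by apply: lt_le_trans d0 Dd.
set y := D^-1.
have y0 : 0 < y by rewrite invr_gt0.
have yD : y * D = 1 by rewrite mulVf // gt_eqF.
have TE : lam * (y * (y * r) * cr) = y * y * (r * lam * cr) by ring.
rewrite TE.
have [s0|s0] := lerP 0 (r * lam).
  apply: le_trans (_ : 0 <= _).
    by rewrite oppr_le0 mulr_ge0.
  by rewrite mulr_ge0 // mulr_ge0 // ltW.
have rho0 : rho < 0 by rewrite /rho pmulr_llt0 // invr_gt0.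
have D1 : 1 <= D by rewrite /D; nra.
have y1 : y <= 1 by rewrite /y invf_le1.
rewrite ltr0_norm // mulNr opprK.
have yy1 : y * y <= 1 by nra.
have sc : r * lam * cr <= 0 by rewrite mulr_le0_ge0 // ltW.
nra.
Qed.

Lemma near_pole lam : lam \in ks -> lam != 0 -> (forall r, r \in ks -> r * lam <= lam ^+ 2) ->
  exists2 d, 0 < d <= 1 &
    (0 < lam * hs ((1 - d) / lam)) /\ (forall r, r \in ks -> d <= 1 - r * ((1 - d) / lam)).
Proof.
move=> lk l0 Hr.
have cl0 : 0 < c lam.
  by move: lk; rewrite mem_ks => /andP [_ cl]; rewrite lt_def cl c_ge0.
have l2 : 0 < lam ^+ 2 by rewrite lt_def sqr_ge0 andbT expf_neq0.
set N := \sum_(r <- ks) `|r * lam| * c r.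
have N0 : 0 <= N by apply: sumr_ge0 => r _; rewrite mulr_ge0 ?c_ge0.
set L := lam ^+ 2 * c lam.
have L0 : 0 < L by rewrite mulr_gt0.
set d := Num.min 1 (L / (N + 1)).
have N1 : 0 < N + 1 by rewrite ltr_wpDl.
have d0 : 0 < d by rewrite /d lt_min ltr01 divr_gt0.
have d1 : d <= 1 by rewrite /d ge_min lexx.
have dL : d * (N + 1) <= L.
  have : d <= L / (N + 1) by rewrite /d ge_min lexx orbT.
  by rewrite ler_pdivlMr.
exists d; first by rewrite d0 d1.
set x := (1 - d) / lam.
have TB r : r \in ks -> - (`|r * lam| * c r) <= lam * ((1 - r * x)^-1 * ((1 - r * x)^-1 * r) * c r)
   /\ d <= 1 - r * x.
  by move=> rk; apply: term_lb => //; [apply: c_ge0 | apply: Hr].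
split; last by move=> r /TB [].
rewrite /hsum mulr_sumr (bigD1_seq lam) //= ?ks_uniq //.
have Tl : lam * ((1 - lam * x)^-1 * ((1 - lam * x)^-1 * lam) * c lam) = L / (d * d).
  have -> : 1 - lam * x = d by rewrite /x; field.
  by rewrite /L; field; rewrite gt_eqF.
rewrite Tl.
have S1 : \sum_(r <- ks | r != lam) - (`|r * lam| * c r) <=
          \sum_(r <- ks | r != lam) lam * ((1 - r * x)^-1 * ((1 - r * x)^-1 * r) * c r).
  rewrite big_seq_cond [X in _ <= X]big_seq_cond; apply: ler_sum => r /andP [rk _].
  by case: (TB r rk).
have S2 : \sum_(r <- ks | r != lam) `|r * lam| * c r <= N.
  rewrite /N (bigD1_seq lam) //= ?ks_uniq // lerDr mulr_ge0 ?c_ge0 //.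
rewrite sumrN in S1.
have Ld : N + 1 <= L / d.
  by rewrite ler_pdivlMr // mulrC.
have Ldd : L / d <= L / (d * d).
  rewrite invfM mulrA ler_peMr //; first by rewrite divr_ge0 // ltW.
  by rewrite invf_ge1.
have key : forall a b : R, - a <= b -> a <= N -> 0 < L / (d * d) + b.
  by move=> a b h1 h2; lra.
exact: key S1 S2.
Qed.

Lemma c0_of_notin l : eigenvalue A l -> l \notin ks -> c l = 0.
Proof. by move=> el; rewrite mem_ks el /= negbK => /eqP. Qed.

Lemma strong : exists2 x0, inJ lmin lmax x0 & nopole x0 /\ feas x0.
Proof.
have l0 : 0 < lmax := lmax_gt0 symA diag0 A0 Hmaxle.
have m0 : lmin < 0 := lmin_lt0 symA diag0 A0 Hminle.
have il0 : 0 < lmax^-1 by rewrite invr_gt0.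
have im0 : lmin^-1 < 0 by rewrite invr_lt0.
have [b [Jb b0 bk bnk]] : exists b, [/\ inJ lmin lmax b, 0 <= b,
    (lmax \in ks -> 0 < hs b /\ b < lmax^-1) & (lmax \notin ks -> b = lmax^-1)].
  case: (boolP (lmax \in ks)) => mk.
    have Hr : forall r, r \in ks -> r * lmax <= lmax ^+ 2.
      move=> r rk; rewrite expr2 ler_pM2r //; apply: Hmaxle.
      by move: rk; rewrite mem_ks => /andP[].
    have [d /andP[d0 d1] [hpos dle]] := near_pole mk (lt0r_neq0 l0) Hr.
    exists ((1 - d) / lmax); split => //.
    - apply/andP; split; first by apply: le_trans (ltW im0) _; rewrite divr_ge0 // ?subr_ge0 // ltW.
      by rewrite -[X in _ <= X](mul1r lmax^-1) ler_pM2r // lerBlDr lerDl ltW.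
    - by rewrite divr_ge0 // ?subr_ge0 // ltW.
    - move=> _; split; last by rewrite -[X in _ < X](mul1r lmax^-1) ltr_pM2r // ltrBlDr ltrDl.
      by move: hpos; rewrite pmulr_rgt0.
  exists lmax^-1; split => //.
  by apply/andP; split => //; apply: ltW (lt_trans im0 il0).
  exact: ltW.
have [a [Ja a0 ak ank]] : exists a, [/\ inJ lmin lmax a, a <= 0,
    (lmin \in ks -> hs a < 0 /\ lmin^-1 < a) & (lmin \notin ks -> a = lmin^-1)].
  case: (boolP (lmin \in ks)) => mk.
    have Hr : forall r, r \in ks -> r * lmin <= lmin ^+ 2.
      move=> r rk; rewrite expr2 ler_nM2r //; apply: Hminle.
      by move: rk; rewrite mem_ks => /andP[].
    have [d /andP[d0 d1] [hpos dle]] := near_pole mk (ltr0_neq0 m0) Hr.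
    have an : (1 - d) / lmin <= 0.
      by apply: mulr_ge0_le0; [rewrite subr_ge0 | apply: ltW].
    exists ((1 - d) / lmin); split => //.
    - apply/andP; split; last by apply: le_trans an (ltW il0).
      by rewrite -[X in X <= _](mul1r lmin^-1) ler_nM2r ?invr_lt0 // lerBlDr lerDl ltW.
    - move=> _; split; last by rewrite -[X in X < _](mul1r lmin^-1) ltr_nM2r ?invr_lt0 // ltrBlDr ltrDl.
      by move: hpos; rewrite nmulr_rgt0.
  exists lmin^-1; split => //.
  by apply/andP; split => //; apply: ltW (lt_trans im0 il0).
  exact: ltW.
have NP : forall y, a <= y <= b -> nopole y.
  move=> y /andP [ay yb] r rk; apply/eqP => r0.
  have Jy : inJ lmin lmax y.
    case/andP: Ja => ha _; case/andP: Jb => _ hb.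
    by apply/andP; split; [apply: le_trans ha ay | apply: le_trans yb hb].
  have er : eigenvalue A r by move: rk; rewrite mem_ks => /andP [].
  case: (pole_end symA diag0 A0 Hminle Hmaxle Jy er r0) => [[rl yl]|[rl yl]].
    have rk' : lmax \in ks by rewrite -rl.
    have [_ h] := bk rk'; move: h; rewrite -yl => h.
    by move: (lt_le_trans h yb); rewrite ltxx.
  have rk' : lmin \in ks by rewrite -rl.
  have [_ h] := ak rk'; move: h; rewrite -yl => h.
  by move: (lt_le_trans h ay); rewrite ltxx.
have hab : a <= b by apply: le_trans a0 b0.
have [ha|ha] := ltrP 0 (hs a).
  have mk : lmin \notin ks.
    by apply/negP => mk; have [h _] := ak mk; move: (lt_trans h ha); rewrite ltxx.
  have ae := ank mk.
  exists a => //; split; first by apply: NP; rewrite lexx hab.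
  apply: (feas_end Hmin (c0_of_notin Hmin mk) (ltr0_neq0 m0) ae).
    by apply: NP; rewrite lexx hab.
  by rewrite pmulr_rle0 // ltW.
have [hb|hb] := ltrP (hs b) 0.
  have mk : lmax \notin ks.
    by apply/negP => mk; have [h _] := bk mk; move: (lt_trans h hb); rewrite ltxx.
  have be := bnk mk.
  exists b => //; split; first by apply: NP; rewrite lexx hab.
  apply: (feas_end Hmax (c0_of_notin Hmax mk) (lt0r_neq0 l0) be).
    by apply: NP; rewrite lexx hab.
  by rewrite nmulr_rle0 // ltW.
have hv : Num.min (hs a) (hs b) <= 0 <= Num.max (hs a) (hs b).
  by rewrite ge_min ha le_max hb orbT.
have [x0 x0in hx0] := IVT hab (hs_cont NP) hv.
move: x0in; rewrite in_itv /= => x0ab.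
exists x0.
  case/andP: Ja => ha' _; case/andP: Jb => _ hb'; case/andP: x0ab => h1 h2.
  by apply/andP; split; [apply: le_trans ha' h1 | apply: le_trans h2 hb'].
have np := NP _ x0ab.
by split => //; apply: feas_int.
Qed.

End Main3.


Theorem proposition2 (R : realType) (n : nat) (e : rel 'I_n) (A : 'M[R]_n)
  (lmin lmax : R) :
  (3 <= n)%N ->
  simple_graph e ->
  weighted_adjacency e A ->
  A != 0 ->
  lmin \in spectrum A -> (forall l, l \in spectrum A -> lmin <= l) ->
  lmax \in spectrum A -> (forall l, l \in spectrum A -> l <= lmax) ->
  exists2 x0 : R, lmin^-1 <= x0 <= lmax^-1 &
    ereal_sup [set (dotv v v)%:E | v in [set v | Sn v /\ dotv v (A *m v) = 0]]
      = W A x0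
    /\ (forall x : R, lmin^-1 <= x <= lmax^-1 -> (W A x0 <= W A x)%E).
Proof.
move=> _ _ [symA [diag0 _]] A0 lminS lminle lmaxS lmaxle.
have Hmin : eigenvalue A lmin by move: lminS; rewrite in_setE.
have Hminle : forall l, eigenvalue A l -> lmin <= l.
  by move=> l el; apply: lminle; rewrite in_setE.
have Hmax : eigenvalue A lmax by move: lmaxS; rewrite in_setE.
have Hmaxle : forall l, eigenvalue A l -> l <= lmax.
  by move=> l el; apply: lmaxle; rewrite in_setE.
have [x0 Jx0 [np [v [Sv Av vv]]]] := strong symA diag0 A0 Hmin Hminle Hmax Hmaxle.
have Wx0 : W A x0 = (dotv v v)%:E by rewrite W_fin // -dot_u1 vv.
exists x0 => //; split.
  apply/le_anti/andP; split.
    apply: ge_ereal_sup => y [w [Sw Aw] <-].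
    exact: (weak symA diag0 A0 Hminle Hmaxle Jx0 Sw Aw).
  by rewrite Wx0; apply: ereal_sup_ubound; exists v.
move=> x Jx; rewrite Wx0.
exact: (weak symA diag0 A0 Hminle Hmaxle Jx Sv Av).
Qed.
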